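(* Let $G$ be a finite connected graph with node set $V$, let $U\subseteq V$, and let $S_U$ be the set of nodes $v$ for which no $x\in U$ satisfies $e(v)=d(v,x)+e(x)$. Then any node $v\in S_U$ with $e(v)=\min_{u\in S_U}e(u)$ is its own unique tight upper certificate: the only node $x\in V$ with $e(v)=d(v,x)+e(x)$ is $x=v$.
   Context: $d$ is the shortest-path distance and $e(u)=\max_{w\in V}d(u,w)$. A node $x$ is a tight upper certificate for $v$ if $e(v)=d(v,x)+e(x)$. *)

(* Defs.v *)
From mathcomp Require Import all_boot.
Set Implicit Arguments. Unset Strict Implicit. Unset Printing Implicit Defensive.

Section Graph.
Variables (T : finType) (g : rel T).

Fixpoint walkn (n : nat) (u w : T) : bool :=
  match n with
  | 0 => u == w
  | n'.+1 => [exists y, g u y && walkn n' y w]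
  end.

(* Any shortest walk has length < #|T|, so searching
   0..#|T|-1 suffices; for unreachable pairs the value is #|T| (irrelevant,
   graphs in the theorem are connected). *)
Definition dist (u w : T) : nat := find (fun n => walkn n u w) (iota 0 #|T|).

Definition ecc (u : T) : nat := \max_(w : T) dist u w.

Definition tight_cert (v x : T) : Prop := ecc v = dist v x + ecc x.

Definition S_set (U : {set T}) : {set T} :=
  [set v | [forall x in U, ecc v != dist v x + ecc x]].

End Graph.

(* Main.v *)
Require Import Defs.
From mathcomp Require Import all_boot.

Section Aux.
Variables (T : finType) (g : rel T).

Lemma dist_le_size u w : dist g u w <= #|T|.
Proof. by rewrite /dist -{2}(size_iota 0 #|T|) find_size. Qed.

Lemma dist_walk u w : dist g u w < #|T| -> walkn g (dist g u w) u w.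
Proof.
move=> H.
have Hs : dist g u w < size (iota 0 #|T|) by rewrite size_iota.
have := Hs; rewrite /dist -has_find => Hh.
have := nth_find 0 Hh.
by rewrite nth_iota // -(size_iota 0 #|T|).
Qed.

Lemma walk_dist n u w : walkn g n u w -> dist g u w <= n.
Proof.
move=> Hw; case: (ltnP n #|T|) => Hn; last first.
  exact: leq_trans (dist_le_size u w) Hn.
rewrite leqNgt; apply/negP => Hlt.
have := before_find 0 Hlt.
by rewrite nth_iota // Hw.
Qed.

Lemma walk_cat a b u x w : walkn g a u x -> walkn g b x w -> walkn g (a + b) u w.
Proof.
elim: a u => [|a IH] u /=.
  by move/eqP=> ->.
move=> /existsP [y /andP [Huy Hyx]] Hxw.
by apply/existsP; exists y; rewrite Huy (IH _ Hyx Hxw).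
Qed.

Lemma dist_tri u x w : dist g u w <= dist g u x + dist g x w.
Proof.
case: (ltnP (dist g u x) #|T|) => H1; last first.
  exact: leq_trans (dist_le_size _ _) (leq_trans H1 (leq_addr _ _)).
case: (ltnP (dist g x w) #|T|) => H2; last first.
  exact: leq_trans (dist_le_size _ _) (leq_trans H2 (leq_addl _ _)).
apply: walk_dist; exact: (walk_cat _ _ _ _ _ (dist_walk _ _ H1) (dist_walk _ _ H2)).
Qed.

Lemma dist_refl v : dist g v v = 0.
Proof. by apply/eqP; rewrite -leqn0; apply: (@walk_dist 0) => /=. Qed.

Lemma dist_eq0 v x : dist g v x = 0 -> x = v.
Proof.
move=> H.
have Hc : 0 < #|T| by apply/card_gt0P; exists v.
have := @dist_walk v x ltac:(by rewrite H).
by rewrite H /= => /eqP.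
Qed.

Lemma dist_le_ecc v w : dist g v w <= ecc g v.
Proof. by rewrite /ecc; apply: (@leq_bigmax_cond _ predT (fun w => dist g v w)). Qed.

Lemma ecc_le v y : ecc g v <= dist g v y + ecc g y.
Proof.
apply/bigmax_leqP => w _.
apply: leq_trans (dist_tri v y w) _.
by rewrite leq_add2l dist_le_ecc.
Qed.
End Aux.

Theorem lemma1 (T : finType) (g : rel T)
  (gsym : symmetric g) (girr : irreflexive g)
  (gconn : forall u w : T, connect g u w)
  (U : {set T}) (v : T)
  (vS : v \in S_set g U)
  (vmin : forall u, u \in S_set g U -> ecc g v <= ecc g u) :
  tight_cert g v v /\ (forall x : T, tight_cert g v x -> x = v).
Proof.
split; first by rewrite /tight_cert dist_refl.
move=> x Hx.
case: (posnP (dist g v x)) => Hd; first exact: (@dist_eq0 _ _ _ _ Hd).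
have Hlt : ecc g x < ecc g v by rewrite Hx -addn1 addnC leq_add2r.
case: (boolP (x \in S_set g U)) => HxS.
  by have := vmin _ HxS; rewrite leqNgt Hlt.
move: HxS; rewrite inE negb_forall => /existsP [y].
rewrite negb_imply negbK => /andP [HyU /eqP Hy].
move: vS; rewrite inE => /forallP /(_ y); rewrite HyU /= => /eqP H; exfalso; apply: H.
apply/eqP; rewrite eqn_leq ecc_le /=.
rewrite /tight_cert in Hx; rewrite Hx Hy addnA leq_add2r.
exact: dist_tri.
Qed.
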